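(* Let $p,q,r$ be integers with $1<p<q<r$, $p$ odd and $pq+pr-qr=1$, and let $n_p=(p-1)/2$. Then $D(p,q,r)=p-1$ if and only if $q-p\ge n_p$.
   Context: $t_{p,q}$, $\alpha_{p,q}$ are the quotient and remainder of $n_p$ divided by $q-p$ ($n_p=t_{p,q}(q-p)+\alpha_{p,q}$, $0\le\alpha_{p,q}<q-p$), and $D(p,q,r)=(t_{p,q}+1)(n_p+\alpha_{p,q})$. *)

(* Defs.v *)
From mathcomp Require Import all_boot all_order all_algebra.
Set Implicit Arguments. Unset Strict Implicit. Unset Printing Implicit Defensive.

Definition n_ (p : nat) : nat := (p - 1) %/ 2.
Definition t_ (p q : nat) : nat := n_ p %/ (q - p).
Definition alpha_ (p q : nat) : nat := n_ p %% (q - p).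
Definition D (p q r : nat) : nat := (t_ p q + 1) * (n_ p + alpha_ p q).

(* Main.v *)
Require Import Defs.
From mathcomp Require Import all_boot all_order all_algebra.
From mathcomp Require Import zify.

Theorem proposition4p3 (p q r : nat) :
  1 < p -> p < q -> q < r -> odd p ->
  ((Posz p * Posz q + Posz p * Posz r - Posz q * Posz r)%R = (1%R : int)) ->
  (D p q r = p - 1 <-> n_ p <= q - p).
Proof.
move=> hp hpq _ hodd _.
have hp1 : p - 1 = 2 * n_ p.
  rewrite /n_; move: hp hodd; clear; case: p => [|p'] // _ /= hodd.
  have e := divn_eq p' 2. rewrite modn2 (negbTE hodd) in e.
  rewrite subn1 /=. lia.
rewrite /D /t_ /alpha_ hp1.
set n := n_ p. set d := q - p.
have hd : 0 < d by rewrite /d; lia.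
have e := divn_eq n d. have hlt := ltn_pmod n hd.
set t := n %/ d in e *. set a := n %% d in e hlt *.
split.
- move=> hD. rewrite leqNgt; apply/negP => hdn.
  case: (ltngtP t 1) => ht1.
  + have t0 : t = 0 by lia.
    rewrite t0 mul0n add0n in e. lia.
  + have h3 : 3 * n <= (t + 1) * (n + a).
      apply: leq_mul; lia.
    lia.
  + rewrite ht1 in hD e. rewrite mul1n in e. lia.
- move=> hnd. case: (ltngtP n d) => h.
  + have t0 : t = 0 by rewrite /t divn_small.
    have a0 : a = n by rewrite /a modn_small.
    rewrite t0 a0; lia.
  + lia.
  + have t0 : t = 1 by rewrite /t h divnn hd.
    have a0 : a = 0 by rewrite /a h modnn.
    rewrite t0 a0; lia.
Qed.
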